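(* Let $d$ be a positive square-free integer with $d\equiv 7\pmod 8$, $K=\mathbb{Q}[\sqrt{-d}]$ with ring of integers $\mathfrak{o}_K$, and $\mathcal{Q}=\mathbb{Q}[\sqrt{d}]$ with ring of integers $\mathfrak{o}_{\mathcal{Q}}=\mathbb{Z}[\sqrt{d}]$. (1) Let $\xi\neq\psi$ be elements of $\{1,i,j,k\}$, $p,m\in\mathbb{Z}$, and let $u=m\sqrt{-d}\,\xi+p\psi\in\mathbb{H}(\mathfrak{o}_K)$ have norm $N(u)=1$. If $1\notin\operatorname{supp}(u)$, then $u$ is a torsion unit. (2) For a unit $\epsilon=p+m\sqrt{d}$ ($p,m\in\mathbb{Z}$) of $\mathfrak{o}_{\mathcal{Q}}$ and $\psi\in\{i,j,k\}$, put $u_{(\epsilon,\psi)}=p+m\sqrt{-d}\,\psi\in\mathbb{H}(\mathfrak{o}_K)$. Then $u_{(\epsilon,\psi)}^n=u_{(\epsilon^n,\psi)}$ for all $\psi\in\{i,j,k\}$ and all $n\in\mathbb{Z}$.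
   Context: $\mathbb{H}(K)=\left(\frac{-1,-1}{K}\right)$ is the quaternion algebra over $K$ with $K$-basis $1,i,j,k$, $i^2=j^2=-1$, $k=ji=-ij$; $\mathbb{H}(\mathfrak{o}_K)$ is the set of $\mathfrak{o}_K$-linear combinations of $1,i,j,k$; the norm is $N(x_1+x_ii+x_jj+x_kk)=x_1^2+x_i^2+x_j^2+x_k^2$. The support $\operatorname{supp}(u)$ of $u$ is the set of basis elements among $1,i,j,k$ whose coefficient in $u$ is nonzero. *)

(* Defs.v *)
(* Quaternions over K = Q(sqrt(-d)) are modelled inside the
   quaternion algebra with coefficients in algC (algebraic complex numbers);
   K, o_K embed in algC via sqrt(-d) := sqrtC (-d), and H(K) is the
   K-subalgebra of quaternions with coefficients in K. *)
From mathcomp Require Import all_boot all_order all_algebra all_field.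
Set Implicit Arguments. Unset Strict Implicit. Unset Printing Implicit Defensive.
Import Order.TTheory GRing.Theory Num.Theory.
Local Open Scope ring_scope.

Inductive qbasis := B1 | Bi | Bj | Bk.

Record quat := Quat { q1 : algC; qi : algC; qj : algC; qk : algC }.

Definition qcoeff (u : quat) (b : qbasis) : algC :=
  match b with B1 => q1 u | Bi => qi u | Bj => qj u | Bk => qk u end.

Definition qadd (a b : quat) : quat :=
  Quat (q1 a + q1 b) (qi a + qi b) (qj a + qj b) (qk a + qk b).
Definition qscale (c : algC) (a : quat) : quat :=
  Quat (c * q1 a) (c * qi a) (c * qj a) (c * qk a).
Definition qone : quat := Quat 1 0 0 0.

Definition qbase (b : qbasis) : quat :=
  match b with
  | B1 => Quat 1 0 0 0 | Bi => Quat 0 1 0 0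
  | Bj => Quat 0 0 1 0 | Bk => Quat 0 0 0 1 end.

(* multiplication with i^2 = j^2 = -1, k = ji = -ij; hence
   i*j = -k, j*i = k, j*k = -i, k*j = i, k*i = -j, i*k = j, k*k = -1 *)
Definition qmul (a b : quat) : quat :=
  Quat (q1 a * q1 b - qi a * qi b - qj a * qj b - qk a * qk b)
       (q1 a * qi b + qi a * q1 b - qj a * qk b + qk a * qj b)
       (q1 a * qj b + qj a * q1 b - qk a * qi b + qi a * qk b)
       (q1 a * qk b + qk a * q1 b - qi a * qj b + qj a * qi b).

Definition qnorm (a : quat) : algC :=
  q1 a ^+ 2 + qi a ^+ 2 + qj a ^+ 2 + qk a ^+ 2.

Definition qconj (a : quat) : quat := Quat (q1 a) (- qi a) (- qj a) (- qk a).
Definition qinv (a : quat) : quat := qscale (qnorm a)^-1 (qconj a).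

Definition qexpn (a : quat) (n : nat) : quat := iter n (qmul a) qone.
Definition qexpz (a : quat) (n : int) : quat :=
  match n with
  | Posz k => qexpn a k
  | Negz k => qexpn (qinv a) k.+1
  end.

Definition squarefree (d : nat) : Prop :=
  forall p : nat, prime p -> ~~ (p * p %| d)%N.

Definition sqrtmd (d : nat) : algC := sqrtC (- (d%:R)).
Definition sqrtd (d : nat) : algC := sqrtC (d%:R).

Definition zsqrtd (d : nat) (p m : int) : algC := p%:~R + m%:~R * sqrtd d.

Definition is_unit_Zsqrtd (d : nat) (eps : algC) : Prop :=
  exists p m p' m' : int,
    eps = zsqrtd d p m /\ eps * zsqrtd d p' m' = 1.

Definition u_eps (d : nat) (p m : int) (psi : qbasis) : quat :=
  qadd (qscale p%:~R qone) (qscale (m%:~R * sqrtmd d) (qbase psi)).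

(* Main.v *)
Require Import Defs.
From mathcomp Require Import all_boot all_order all_algebra all_field.
From mathcomp Require Import zify ring.
Import Order.TTheory GRing.Theory Num.Theory.
Local Open Scope ring_scope.

Lemma sq_mod8 (x : nat) : ((x ^ 2 %% 8 == 0) || (x ^ 2 %% 8 == 1) || (x ^ 2 %% 8 == 4))%N
  /\ (odd x -> x ^ 2 %% 8 = 1)%N.
Proof.
rewrite -modnXm -(odd_mod x (erefl : odd 8 = false)).
have : (x %% 8 < 8)%N by rewrite ltn_pmod.
by case: (x %% 8)%N => [|[|[|[|[|[|[|[|]]]]]]]].
Qed.

Lemma nosq (d : nat) (hd : (d %% 8 = 7)%N) : forall y x : nat, (x ^ 2 = d * y ^ 2)%N -> y = 0%N.
Proof.
move=> y0; elim: y0 {-2}y0 (leqnn y0) => [|n IH] y hy x hxy; first by apply/eqP; rewrite -leqn0.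
case Hy: (odd y).
  have [_ h1] := sq_mod8 y. have [h2 _] := sq_mod8 x.
  move: h2; rewrite hxy -modnMm hd h1 //.
have [y' Hy'] : exists y', y = (2 * y')%N by exists (y./2); rewrite -[LHS]odd_double_half Hy; lia.
have Hx : ~~ odd x.
  apply/negP => ox. move: (congr1 odd hxy). rewrite !oddX !oddM Hy /= ox. by rewrite andbF.
have [x' Hx'] : exists x', x = (2 * x')%N by exists (x./2); rewrite -[LHS]odd_double_half (negbTE Hx); lia.
subst x y.
have : (x' ^ 2 = d * y' ^ 2)%N.
  move: hxy; rewrite !expnMn mulnCA; move/eqP; rewrite eqn_mul2l /=; by move/eqP.
have hy2 : (y' <= n)%N by lia.
by move/(IH y' hy2) ->.
Qed.

Lemma sqrtd2 d : sqrtd d ^+ 2 = d%:R. Proof. exact: sqrtCK. Qed.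
Lemma sqrtmd2 d : sqrtmd d ^+ 2 = - d%:R. Proof. exact: sqrtCK. Qed.

Lemma zsqrtd_inj d (hd : (d %% 8 = 7)%N) a b c e :
  zsqrtd d a b = zsqrtd d c e -> a = c /\ b = e.
Proof.
rewrite /zsqrtd => h.
have h1 : (a - c)%:~R = (e - b)%:~R * sqrtd d :> algC.
  apply/eqP; rewrite -subr_eq0.
  have -> : (a - c)%:~R - (e - b)%:~R * sqrtd d =
     (a%:~R + b%:~R * sqrtd d) - (c%:~R + e%:~R * sqrtd d) :> algC by ring.
  by rewrite h subrr.
have h2 : ((a - c) ^+ 2)%:~R = ((e - b) ^+ 2 * d%:Z)%:~R :> algC.
  transitivity (((a - c)%:~R : algC) ^+ 2); first by ring.
  rewrite h1 exprMn sqrtd2; ring.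
move/eqP: h2; rewrite eqr_int => /eqP /(congr1 absz).
rewrite abszM !abszX /= mulnC => /nosq => /(_ hd) /eqP.
rewrite absz_eq0 subr_eq0 => /eqP eb; subst e.
split => //. move: h1; rewrite subrr mul0r => /eqP; rewrite intr_eq0 subr_eq0; by move/eqP.
Qed.

Lemma zsqrtdM d a b c e :
  zsqrtd d a b * zsqrtd d c e = zsqrtd d (a * c + d%:Z * b * e) (a * e + b * c).
Proof.
rewrite /zsqrtd !(rmorphD, rmorphM) /=.
have -> : (d%:Z)%:~R = sqrtd d ^+ 2 :> algC by rewrite sqrtd2.
ring.
Qed.

Lemma zsqrtd1 d : zsqrtd d 1 0 = 1.
Proof. rewrite /zsqrtd; ring. Qed.

Lemma zpow_ex d a b (k : nat) : exists c e, zsqrtd d a b ^+ k = zsqrtd d c e.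
Proof.
elim: k => [|k [c [e IH]]]; first by exists 1, 0; rewrite expr0 zsqrtd1.
by exists (a * c + d%:Z * b * e), (a * e + b * c); rewrite exprS IH zsqrtdM.
Qed.

Lemma ueps_mul d a b c e psi : psi <> B1 ->
  qmul (u_eps d a b psi) (u_eps d c e psi) =
  u_eps d (a * c + d%:Z * b * e) (a * e + b * c) psi.
Proof.
have hd : (d%:Z)%:~R = - sqrtmd d ^+ 2 :> algC by rewrite sqrtmd2 opprK.
case: psi => // _; rewrite /u_eps /qmul /qadd /qscale /qone /qbase /=;
  congr Quat; rewrite !(rmorphD, rmorphM) /= hd; ring.
Qed.

Lemma ueps1 d psi : u_eps d 1 0 psi = qone.
Proof. case: psi; rewrite /u_eps /qadd /qscale /qone /qbase /=; congr Quat; ring. Qed.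

Lemma qpow_pos d (hd : (d %% 8 = 7)%N) a b psi (hpsi : psi <> B1) (k : nat) :
  forall c e, zsqrtd d a b ^+ k = zsqrtd d c e -> qexpn (u_eps d a b psi) k = u_eps d c e psi.
Proof.
elim: k => [|k IH] c e.
  rewrite expr0 -(zsqrtd1 d) => /(@zsqrtd_inj d hd) [<- <-]; by rewrite ueps1.
have [c' [e' H']] := zpow_ex d a b k.
rewrite exprS H' zsqrtdM => /(@zsqrtd_inj d hd) [<- <-].
by rewrite /qexpn iterS -/(qexpn _ k) (IH _ _ H') ueps_mul.
Qed.

Lemma qinv_ueps d (hd : (d %% 8 = 7)%N) p m p' m' psi (hpsi : psi <> B1) :
  zsqrtd d p m * zsqrtd d p' m' = 1 ->
  qinv (u_eps d p m psi) = u_eps d p' m' psi.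
Proof.
move=> hu.
pose N := p * p - d%:Z * m * m.
have e1 : zsqrtd d p (- m) = zsqrtd d (N * p') (N * m').
  have -> : zsqrtd d (N * p') (N * m') = zsqrtd d N 0 * zsqrtd d p' m'.
    by rewrite zsqrtdM; congr zsqrtd; ring.
  have -> : zsqrtd d N 0 = zsqrtd d p m * zsqrtd d p (- m).
    by rewrite zsqrtdM /N; congr zsqrtd; ring.
  by rewrite mulrAC hu mul1r.
have [hp hm] := @zsqrtd_inj d hd _ _ _ _ e1.
have hN : N != 0.
  apply/eqP => N0; move: hu; rewrite hp N0 mul0r.
  have -> : m = 0 by apply/eqP; rewrite -oppr_eq0 hm N0 mul0r.
  by rewrite /zsqrtd !mul0r add0r mul0r => /eqP; rewrite eq_sym oner_eq0.
have hn : qnorm (u_eps d p m psi) = N%:~R.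
  have hd' : (d%:Z)%:~R = - sqrtmd d ^+ 2 :> algC by rewrite sqrtmd2 opprK.
  by case: psi hpsi => // _; rewrite /qnorm /u_eps /qadd /qscale /qone /qbase /= /N
    !(rmorphB, rmorphM) /= hd'; ring.
have hp' : p%:~R = N%:~R * p'%:~R :> algC by rewrite hp rmorphM.
have hm' : m%:~R = - (N%:~R * m'%:~R) :> algC by rewrite -rmorphM -hm rmorphN opprK.
have hN' : N%:~R != 0 :> algC.
  by rewrite intr_eq0.
rewrite /qinv hn.
move: (N%:~R) hN' hp' hm' => nN hN' hp' hm'.
clear hn; case: psi hpsi => // _; rewrite /qconj /u_eps /qadd /qscale /qone /qbase /= hp' hm';
  congr Quat; field; exact: hN'.
Qed.

Lemma pow4 (u : quat) : qnorm u = 1 -> qcoeff u B1 = 0 -> qexpn u 4 = qone.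
Proof.
case: u => a b c e; rewrite /qnorm /= => hn ha; subst a.
change (qmul (Quat 0 b c e) (qmul (Quat 0 b c e) (qmul (Quat 0 b c e) (qmul (Quat 0 b c e) qone))) = qone).
have -> : qmul (Quat 0 b c e) qone = Quat 0 b c e by rewrite /qmul /qone /=; congr Quat; ring.
have -> : qmul (Quat 0 b c e) (Quat 0 b c e) = Quat (-1) 0 0 0.
  rewrite /qmul /=; congr Quat; try ring.
  by rewrite -hn; ring.
have -> : qmul (Quat 0 b c e) (Quat (-1) 0 0 0) = Quat 0 (-b) (-c) (-e).
  by rewrite /qmul /=; congr Quat; ring.
rewrite /qmul /qone /=; congr Quat; try ring.
by rewrite -hn; ring.
Qed.

Theorem mainTheorem15 (d : nat) (d_pos : (0 < d)%N) (d_sqf : squarefree d)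
    (d_mod8 : (d %% 8 = 7)%N) :
  (* (1) *)
  (forall (xi psi : qbasis) (p m : int), xi <> psi ->
     let u := qadd (qscale (m%:~R * sqrtmd d) (qbase xi))
                   (qscale p%:~R (qbase psi)) in
     qnorm u = 1 -> qcoeff u B1 = 0 ->
     exists n : nat, (0 < n)%N /\ qexpn u n = qone)
  /\
  (* (2) *)
  (forall p m : int, is_unit_Zsqrtd d (zsqrtd d p m) ->
   forall (psi : qbasis), psi <> B1 ->
   forall n : int,
     (exists pn mn : int, zsqrtd d p m ^ n = zsqrtd d pn mn) /\
     (forall pn mn : int, zsqrtd d p m ^ n = zsqrtd d pn mn ->
        qexpz (u_eps d p m psi) n = u_eps d pn mn psi)).
Proof.
split.
  move=> xi psi p m _ u hn h1; exists 4%N; split => //; exact: pow4.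
move=> p m [p0 [m0 [p' [m' [_ hu]]]]] psi hpsi [] k.
  rewrite -exprnP; split; first exact: zpow_ex.
  exact: qpow_pos.
have hnz : zsqrtd d p m != 0.
  by apply/eqP => h0; move: hu; rewrite h0 mul0r => /eqP; rewrite eq_sym oner_eq0.
have hinv : (zsqrtd d p m)^-1 = zsqrtd d p' m' by rewrite -[RHS](mulKf hnz) hu mulr1.
have -> : zsqrtd d p m ^ Negz k = zsqrtd d p' m' ^+ k.+1.
  by rewrite -hinv exprVn.
split; first exact: zpow_ex.
move=> pn mn hh; rewrite /qexpz (@qinv_ueps d d_mod8 _ _ _ _ _ hpsi hu).
exact: qpow_pos.
Qed.
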